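(* Let $q$ be a prime power, $F=\mathbb{F}_q$, $m\ge1$ with $\gcd(q,m)=1$, and $R=F[x]/\langle x^m-1\rangle$. Let $C\subseteq R^2$ be the quasi-cyclic code (R-submodule) generated by one element $(g_{11}(x),g_{12}(x))$, where $g_{11}(x)\mid x^m-1$ and $\deg g_{12}<m$. Let $g(x)=\gcd(g_{11}(x),g_{12}(x))$. Then $C$ is Euclidean LCD if and only if $$\gcd\left(\frac{x^m-1}{g(x)},\ g_{11}(x)\bar g_{11}(x)+g_{12}(x)\bar g_{12}(x)\right)=1.$$
   Context: Elements of $R$ are represented by polynomials of degree $<m$ and identified with their coefficient vectors in $F^m$; a quasi-cyclic code of length $2m$ and index 2 is an $R$-submodule of $R^2$. The Euclidean inner product of $(a_1,a_2),(b_1,b_2)\in R^2$ is the sum of the standard dot products of the coefficient vectors of $a_1,b_1$ and of $a_2,b_2$; $C$ is Euclidean LCD if $C\cap C^{\perp_e}=\{0\}$. For a polynomial $f$ of degree at most $m$, $\bar f(x)=x^m f(x^{-1})$. *)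

(* Defs.v *)
From HB Require Import structures.
From mathcomp Require Import all_boot all_order all_algebra all_field.
Set Implicit Arguments. Unset Strict Implicit. Unset Printing Implicit Defensive.
Import GRing.Theory.
Local Open Scope ring_scope.

(* R = F[x]/<x^m - 1>; elements represented by their reduced polynomial
   representative (degree < m), identified with coefficient vectors in F^m. *)
Definition xm1 (F : fieldType) (m : nat) : {poly F} := 'X^m - 1.

Definition redR (F : fieldType) (m : nat) (p : {poly F}) : {poly F} := p %% xm1 F m.

Definition qc_code1 (F : fieldType) (m : nat) (g1 g2 : {poly F})
  (c : {poly F} * {poly F}) : Prop :=
  exists a : {poly F}, c = (redR m (a * g1), redR m (a * g2)).

Definition eip (F : fieldType) (m : nat) (c d : {poly F} * {poly F}) : F :=
  \sum_(i < m) ((redR m c.1)`_i * (redR m d.1)`_i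
               + (redR m c.2)`_i * (redR m d.2)`_i).

Definition euclidean_LCD (F : fieldType) (m : nat)
  (C : {poly F} * {poly F} -> Prop) : Prop :=
  forall c, C c -> (forall d, C d -> eip m c d = 0) -> c = (0, 0).

(* reciprocal: \bar f(x) = x^m f(x^{-1}) for deg f <= m *)
Definition recip (F : fieldType) (m : nat) (f : {poly F}) : {poly F} :=
  \poly_(i < m.+1) f`_(m - i).

(* Main.v *)
Require Import Defs.
From HB Require Import structures.
From mathcomp Require Import all_boot all_order all_algebra all_field.
Import GRing.Theory.
From mathcomp Require Import ring.
Set Implicit Arguments. Unset Strict Implicit. Unset Printing Implicit Defensive.
Local Open Scope ring_scope.

Section Bform.
Variable F : fieldType.
Variable m : nat.
Hypothesis Hm : (0 < m)%N.
Local Notation N := (xm1 F m).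
Implicit Types u v w r p : {poly F}.

Definition Bf (u v : {poly F}) : F := \sum_(i < m) (redR m u)`_i * (redR m v)`_i.

Lemma sizeN : size N = m.+1.
Proof. by rewrite /xm1 size_Xn_sub_1. Qed.

Lemma N_neq0 : N != 0.
Proof. by rewrite -size_poly_eq0 sizeN. Qed.

Lemma size_red u : (size (redR m u) <= m)%N.
Proof. by rewrite -ltnS -sizeN ltn_modp N_neq0. Qed.

Lemma B_modl u v : Bf (u %% N) v = Bf u v.
Proof. by rewrite /Bf /redR modp_id. Qed.

Lemma B_modr u v : Bf u (v %% N) = Bf u v.
Proof. by rewrite /Bf /redR modp_id. Qed.

Lemma B_sym u v : Bf u v = Bf v u.
Proof. by apply: eq_bigr => i _; rewrite mulrC. Qed.

Lemma B_addl u u' v : Bf (u + u') v = Bf u v + Bf u' v.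
Proof.
rewrite /Bf -big_split; apply: eq_bigr => i _.
by rewrite /redR modpD coefD mulrDl.
Qed.

Lemma B_scalel c u v : Bf (c *: u) v = c * Bf u v.
Proof.
rewrite /Bf mulr_sumr; apply: eq_bigr => i _.
by rewrite /redR modpZl coefZ mulrA.
Qed.

Lemma B_addr u v v' : Bf u (v + v') = Bf u v + Bf u v'.
Proof. by rewrite B_sym B_addl !(B_sym u). Qed.

Lemma B_0r u w : N %| w -> Bf u w = 0.
Proof.
move=> /modp_eq0 H; rewrite /Bf big1 // => i _.
by rewrite /redR H coef0 mulr0.
Qed.

Lemma B_Xj u (j : nat) : (j < m)%N -> Bf u 'X^j = (u %% N)`_j.
Proof.
move=> jm; rewrite /Bf /redR (modp_small (p := 'X^j)); last by rewrite size_polyXn sizeN.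
rewrite (bigD1 (Ordinal jm)) //= big1 ?addr0 ?coefXn ?eqxx ?mulr1 //.
move=> i /negbTE ne; rewrite coefXn.
suff -> : (i == j :> nat) = false by rewrite mulr0.
by rewrite -ne.
Qed.

Lemma modX_coef r (i : nat) : (size r <= m)%N -> (i < m)%N ->
  (('X * r) %% N)`_i = if i == 0%N then r`_(m.-1) else r`_(i.-1).
Proof.
move=> sr im.
have E : 'X * r = (r`_(m.-1))%:P * N + ('X * r - r`_(m.-1) *: N).
  by rewrite mul_polyC addrC subrK.
rewrite E modp_addl_mul_small.
  rewrite coefB coefXM coefZ /xm1 coefB coefXn coef1.
  have -> : (i == m) = false by apply/negbTE; rewrite neq_ltn im.
  case: (i == 0%N); rewrite /= ?mulr1n ?mulr0n ?mulr0 ?mulrN ?mulr1 ?subr0 ?sub0r ?opprK;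
  by rewrite ?mulr0 ?mulrN1 ?opprK ?subr0.
rewrite /xm1 size_Xn_sub_1 // ltnS; apply/leq_sizeP => j jm.
rewrite coefB coefXM coefZ /xm1 coefB coefXn coef1.
have j0 : (j == 0%N) = false by apply/negbTE; rewrite -lt0n (leq_trans Hm).
rewrite j0.
move: jm; rewrite leq_eqVlt => /orP [/eqP <-|mj]; last first.
  have -> : (j == m) = false by apply/negbTE; rewrite gtn_eqF.
  rewrite subr0 mulr0 subr0; apply/(leq_sizeP _ _ sr).
  by rewrite -ltnS prednK // (leq_trans Hm) // ltnW.
by rewrite eqxx subr0 mulr1 subrr.
Qed.

Lemma shift_sum (n : nat) (f : nat -> F) :
  \sum_(i < n.+1) (if (i : nat) == 0%N then f n else f i.-1) = \sum_(i < n.+1) f i.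
Proof. by rewrite big_ord_recl big_ord_recr /= addrC. Qed.

Lemma B_shift u v : Bf ('X * u) ('X * v) = Bf u v.
Proof.
rewrite /Bf /redR -(modp_mul 'X u) -(modp_mul 'X v).
have su := size_red u; have sv := size_red v.
rewrite /redR in su sv.
pose f i := (u %% N)`_i * (v %% N)`_i.
transitivity (\sum_(i < m) (if (i : nat) == 0%N then f m.-1 else f i.-1)).
  apply: eq_bigr => i _; rewrite !modX_coef //.
  by case: (_ == _).
have [n Em] : exists n, m = n.+1 by exists m.-1; rewrite prednK.
rewrite Em /= shift_sum /f; by rewrite Em.
Qed.

Lemma B_adjX u v : Bf ('X * u) v = Bf u ('X^(m.-1) * v).
Proof.
rewrite -B_modr.
have -> : v %% N = ('X^m * v) %% N.
  apply/eqP; rewrite -subr_eq0 -modpN -modpD.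
  have -> : v - 'X^m * v = - (v * N) by rewrite /xm1 mulrBr mulr1 opprB mulrC.
  by rewrite modpN modp_mull oppr0.
rewrite B_modr.
have -> : 'X^m = 'X * 'X^(m.-1) :> {poly F} by rewrite -exprS prednK.
by rewrite -mulrA B_shift.
Qed.

Lemma B_0l v : Bf 0 v = 0.
Proof. by rewrite B_sym B_0r ?dvdp0. Qed.

Lemma B_scaler c u v : Bf u (c *: v) = c * Bf u v.
Proof. by rewrite B_sym B_scalel B_sym. Qed.

Lemma B_adj p u v : Bf (p * u) v = Bf u ((p \Po 'X^(m.-1)) * v).
Proof.
elim/poly_ind: p u v => [|p c IH] u v.
  by rewrite !mul0r comp_poly0 mul0r B_0l B_0r ?dvdp0.
rewrite comp_poly_MXaddC !mulrDl !mul_polyC B_addl B_addr B_scalel B_scaler.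
by rewrite -mulrA IH B_adjX mulrA [_ * 'X^_]mulrC.
Qed.

Lemma xdiff (i j : nat) : i = j %[mod m] -> N %| 'X^i - 'X^j.
Proof.
wlog ij : i j / (i <= j)%N.
  move=> W e; case: (leqP i j) => h; first exact: W.
  by rewrite -opprB dvdpNr W // ltnW.
move=> /eqP; rewrite eq_sym eqn_mod_dvd // => /dvdnP [k Ek].
have -> : j = (i + k * m)%N by rewrite -Ek subnKC.
rewrite exprD -opprB dvdpNr.
have -> : 'X^i * 'X^(k * m) - 'X^i = 'X^i * ('X^(k * m) - 1) :> {poly F}
  by rewrite mulrBr mulr1.
apply: dvdp_mull.
have -> : ('X^(k * m) - 1 : {poly F}) = ('X^m) ^+ k - 1 ^+ k
  by rewrite expr1n mulnC exprM.
by rewrite subrXX /xm1 dvdp_mulr.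
Qed.

Lemma dvdp_bsum (I : Type) (r : seq I) (P : pred I) (G : I -> {poly F}) :
  (forall i, P i -> N %| G i) -> N %| \sum_(i <- r | P i) G i.
Proof.
move=> H; elim/big_rec: _ => [|i q Pi Hq]; first exact: dvdp0.
by rewrite dvdp_add // H.
Qed.

Lemma recip_cong (f : {poly F}) : (size f <= m.+1)%N -> N %| recip m f - (f \Po 'X^(m.-1)).
Proof.
move=> sf.
have E1 : recip m f = \sum_(i < m.+1) f`_i *: 'X^(m - i).
  rewrite /recip poly_def (reindex_inj rev_ord_inj) /=.
  apply: eq_bigr => i _; rewrite subSS subKn //; exact: (ltn_ord i).
have E2 : f \Po 'X^(m.-1) = \sum_(i < m.+1) f`_i *: ('X^(m.-1)) ^+ i.
  rewrite comp_polyE (big_ord_widen _ (fun i => f`_i *: ('X^(m.-1)) ^+ i) sf).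
  rewrite big_mkcond /=; apply: eq_bigr => i _.
  by case: ltnP => // h; rewrite nth_default // scale0r.
rewrite E1 E2 -sumrB; apply: dvdp_bsum => i _.
rewrite -scalerBr -mul_polyC dvdp_mull // -exprM; apply: xdiff.
have im : (i <= m)%N by rewrite -ltnS.
apply/eqP; rewrite -(eqn_modDr i) subnK //.
by rewrite -mulSnr prednK // modnMr modnn.
Qed.

End Bform.

Lemma mR_neq0 (F : finFieldType) (m : nat) : coprime #|F| m -> m%:R != 0 :> F.
Proof.
move=> cop; have [p pp pc] := finPcharP F.
apply/negP => /eqP m0.
have pm : (p %| m)%N by rewrite (dvdn_pcharf pc) m0.
have cF0 : #|F| = (p ^ logn p #|F|)%N := card_pprimeChar pc.
move: cop; move: (logn p #|F|) cF0 => [|k] cF.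
  by move: (finNzRing_gt1 F); rewrite cF.
by rewrite cF coprime_pexpl // prime_coprime // pm.
Qed.

Section Main.
Variable F : fieldType.
Variable m : nat.
Hypothesis Hm : (0 < m)%N.
Variables g11 g12 : {poly F}.
Local Notation N := (xm1 F m).
Local Notation tl p := (p \Po 'X^(m.-1)).
Hypothesis g11N : g11 %| N.
Hypothesis sg12 : (size g12 <= m)%N.
Let h := g11 * recip m g11 + g12 * recip m g12.
Let H := g11 * tl g11 + g12 * tl g12.

Lemma hH a : (N %| a * h) = (N %| a * H).
Proof.
have : N %| a * h - a * H.
  rewrite -mulrBr dvdp_mull // /h /H.
  have -> : g11 * recip m g11 + g12 * recip m g12 - (g11 * tl g11 + g12 * tl g12)
     = g11 * (recip m g11 - tl g11) + g12 * (recip m g12 - tl g12) by ring.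
  rewrite dvdp_add // dvdp_mull // recip_cong //.
    by rewrite -(sizeN F Hm) dvdp_leq // N_neq0.
  exact: leqW.
move=> D; apply/idP/idP => Hd.
  by rewrite (dvdp_subr _ Hd) in D.
by rewrite (dvdp_subl _ Hd) in D.
Qed.

Lemma keyB a b : Bf m (a * g11) (b * g11) + Bf m (a * g12) (b * g12) = Bf m b (a * H).
Proof.
rewrite (B_sym _ (a * g11)) (B_sym _ (a * g12)) [b * g11]mulrC [b * g12]mulrC.
rewrite !(B_adj Hm) -B_addr; congr (Bf m b _); rewrite /H; ring.
Qed.

Lemma eip_code a b :
  eip m (redR m (a * g11), redR m (a * g12)) (redR m (b * g11), redR m (b * g12))
  = Bf m b (a * H).
Proof.
rewrite -keyB /eip big_split /=.
by rewrite -/(Bf _ _ _) -/(Bf _ _ _) /redR !B_modl !B_modr.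
Qed.

Lemma LCD_iff : euclidean_LCD m (qc_code1 m g11 g12) <->
  (forall a, N %| a * h -> (N %| a * g11) /\ (N %| a * g12)).
Proof.
split.
  move=> L a Ha.
  have E : (redR m (a * g11), redR m (a * g12)) = (0, 0).
    apply: L; first by exists a.
    by move=> d [b ->]; rewrite eip_code B_0r // -hH.
  by case: E => /modp_eq0P -> /modp_eq0P ->.
move=> C c [a ->] orth.
have : N %| a * H.
  apply/modp_eq0P; apply/polyP => j; rewrite coef0.
  case: (ltnP j m) => jm; last first.
    apply: nth_default; apply: leq_trans jm.
    by rewrite -ltnS -(sizeN F Hm) ltn_modp N_neq0.
  rewrite -(B_Xj Hm _ jm) B_sym -eip_code; apply: orth.
  by exists 'X^j.
rewrite -hH => /C [/modp_eq0P e1 /modp_eq0P e2].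
by rewrite /redR e1 e2.
Qed.

Hypothesis sepN : separable_poly N.

Lemma poly_iff :
  (forall a, N %| a * h -> (N %| a * g11) /\ (N %| a * g12)) <->
  coprimep (N %/ gcdp g11 g12) h.
Proof.
set g := gcdp g11 g12; set M := N %/ g.
have g11n0 : g11 != 0.
  by apply: contraTneq g11N => ->; rewrite dvd0p N_neq0.
have gn0 : g != 0 by rewrite gcdp_eq0 negb_and g11n0.
have gN : g %| N by apply: dvdp_trans g11N; apply: dvdp_gcdl.
have NMg : M * g = N by rewrite divpK.
have Mn0 : M != 0.
  by apply/negP => /eqP e; move: (N_neq0 F Hm); rewrite -NMg e mul0r eqxx.
have key : forall a, ((N %| a * g11) /\ (N %| a * g12)) <-> M %| a.
  move=> a; rewrite -(dvdp_mul2r M a gn0) NMg.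
  rewrite (eqp_dvdr _ (mulp_gcdr g11 g12 a)) dvdp_gcd.
  by split => [[-> ->] | /andP].
have gh : g %| h.
  by rewrite /h dvdp_add // dvdp_mulr // ?dvdp_gcdl ?dvdp_gcdr.
split => [C | cop a Na]; last first.
  apply/key; rewrite -(Gauss_dvdpl _ cop).
  by apply: dvdp_trans Na; rewrite -NMg dvdp_mulr.
set d := gcdp M h.
have dM : d %| M by apply: dvdp_gcdl.
have dh : d %| h by apply: dvdp_gcdr.
have cgM : coprimep g M by apply: (separable_coprime sepN); rewrite mulrC NMg.
have cgd : coprimep g d by apply: coprimep_dvdl cgM.
have gdh : g * d %| h by rewrite Gauss_dvdp // gh dh.
set a := M %/ d.
have Mad : a * d = M by rewrite divpK.
have an0 : a != 0.
  by apply/negP => /eqP e; move: Mn0; rewrite -Mad e mul0r eqxx.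
have Ma : M %| a.
  apply/key/C; rewrite -NMg -Mad.
  have -> : a * d * g = a * (g * d) by rewrite -mulrA [d * g]mulrC.
  by rewrite dvdp_mul2l.
move: Ma; rewrite -{1}Mad -[X in _ %| X]mulr1 dvdp_mul2l // dvdp1 => sd.
by rewrite coprimep_def.
Qed.

End Main.
Unset Implicit Arguments.

Theorem theorem4p3 (F : finFieldType) (m : nat) (g11 g12 : {poly F}) :
  (0 < m)%N -> coprime #|F| m ->
  g11 %| xm1 F m -> (size g12 <= m)%N ->
  euclidean_LCD m (qc_code1 m g11 g12) <->
  coprimep (xm1 F m %/ gcdp g11 g12)
           (g11 * recip m g11 + g12 * recip m g12).
Proof.
move=> Hm cop g11N sg12.
have sep : separable_poly (xm1 F m).
  by apply: separable_Xn_sub_1; exact: mR_neq0.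
apply: (iff_trans (LCD_iff Hm g11N sg12)).
exact: poly_iff.
Qed.
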